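(* Let $n\ge5$. For $1\le r\le n-1$ let $N(n,r)$ be the number of triples $(\alpha,\beta,\gamma)\in(\mathbb{Z}_2^n)^3$ with $\mathrm{adp}^{\mathrm{XR}}_r(\alpha,\beta\to\gamma)=0$. Then $N(n,r)<N(n,1)$ for every $r$ with $2\le r\le n-1$.
   Context: For $x\in\mathbb{Z}_2^n$, $x=(x_0,\dots,x_{n-1})$ is identified with the integer $\sum_i x_i2^{n-1-i}$; $+$ is addition modulo $2^n$, $\oplus$ is bitwise XOR, $x\lll r=(x_r,\dots,x_{n-1},x_0,\dots,x_{r-1})$. $\mathrm{adp}^{\mathrm{XR}}_r(\alpha,\beta\to\gamma)=4^{-n}\#\{(x,y)\in(\mathbb{Z}_2^n)^2: ((x+\alpha)\oplus(y+\beta))\lll r=((x\oplus y)\lll r)+\gamma\}$. *)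

(* Defs.v *)
From mathcomp Require Import all_boot all_order all_algebra.
Set Implicit Arguments. Unset Strict Implicit. Unset Printing Implicit Defensive.

Definition bv (n : nat) := {ffun 'I_n -> bool}.

Definition bv_val n (x : bv n) : nat := \sum_(i < n) (x i : nat) * 2 ^ (n.-1 - i).

Definition bv_of_nat n (k : nat) : bv n := [ffun i : 'I_n => odd (k %/ 2 ^ (n.-1 - i))].

Definition bv_add n (x y : bv n) : bv n := bv_of_nat n (bv_val x + bv_val y).

Definition bv_xor n (x y : bv n) : bv n := [ffun i => x i (+) y i].

Definition rot_idx n (i : 'I_n) (r : nat) : 'I_n :=
  match n return 'I_n -> 'I_n with
  | 0 => fun i => i
  | m.+1 => fun i => inord ((i + r) %% m.+1)
  end i.

(* left rotation: (x <<< r) = (x_r, ..., x_{n-1}, x_0, ..., x_{r-1}),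
   i.e. (x <<< r)_i = x_{(i + r) mod n} *)
Definition bv_rotl n (x : bv n) (r : nat) : bv n := [ffun i : 'I_n => x (rot_idx i r)].

Definition adp_count n (r : nat) (a b g : bv n) : nat :=
  #|[set p : bv n * bv n |
     bv_rotl (bv_xor (bv_add p.1 a) (bv_add p.2 b)) r
       == bv_add (bv_rotl (bv_xor p.1 p.2) r) g]|.

Definition adpXR n (r : nat) (a b g : bv n) : rat :=
  ((adp_count r a b g)%:R / (4 ^ n)%:R)%R.

Definition Nzero (n r : nat) : nat :=
  #|[set t : bv n * bv n * bv n | adpXR r t.1.1 t.1.2 t.2 == 0%R]|.

(* Main.v *)
Require Import Defs.
From mathcomp Require Import all_boot all_order all_algebra.
From mathcomp Require Import ring lra zify.
Set Implicit Arguments. Unset Strict Implicit. Unset Printing Implicit Defensive.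
Import Order.TTheory GRing.Theory Num.Theory.

Definition st := (bool * bool * bool)%type.
Definition allst : seq st := [:: (false,false,false); (false,false,true); (false,true,false); (false,true,true); (true,false,false); (true,false,true); (true,true,false); (true,true,true)].
Definition maj (p q s : bool) := (p && q) || (p && s) || (q && s).
Definition okst (s l : st) : bool :=
  let '(c,d,k) := s in let '(a,b,g) := l in (a (+) b (+) c (+) d) == (g (+) k).
Definition nxt (s l : st) (x z : bool) : st :=
  let '(c,d,k) := s in let '(a,b,g) := l in (maj x a c, maj (x (+) z) b d, maj z g k).
Definition chs : seq (bool * bool) := [:: (false,false);(false,true);(true,false);(true,true)].
Definition reach (S : seq st) (l : st) : seq st :=
  [seq t <- allst | has (fun s => okst s l && has (fun xz : bool*bool => nxt s l xz.1 xz.2 == t) chs) S].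
Definition PS := (seq st * seq st)%type.
Definition reach2 (P : PS) l : PS := (reach P.1 l, reach P.2 l).
Definition reset (S : seq st) : seq st := [seq t <- allst | (t.2 == false) && has (fun s => s.1 == t.1) S].
Definition reset2 (P : PS) : PS := (reset P.1, reset P.2).
Definition fin2 (Q : PS) : bool := ~~ has (fun s => s.2 == false) Q.1 && ~~ has (fun s => s.2 == true) Q.2.
Definition sumL (f : st -> nat) : nat := foldr (fun l acc => f l + acc) 0 allst.
Fixpoint H (r : nat) (Q : PS) : nat := if r is r'.+1 then sumL (fun l => H r' (reach2 Q l)) else fin2 Q.
Fixpoint L (m r : nat) (P : PS) : nat := if m is m'.+1 then sumL (fun l => L m' r (reach2 P l)) else H r (reset2 P).
Definition Pinit : PS := ([:: (false,false,false)], [:: (false,false,true)]).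

Local Open Scope ring_scope.
Definition tabH : seq (PS * seq int) := [::
  (([::], [:: (false,false,false)]), [:: 2520; 1470; 420]);
  (([::], [::]), [:: 4410; 0; 0]);
  (([::], [:: (false,false,false); (false,false,true); (false,true,false); (false,true,true)]), [:: 0; 0; 0]);
  (([::], [:: (false,false,false); (false,false,true); (true,false,false); (true,false,true)]), [:: 0; 0; 0]);
  (([::], [:: (false,false,false); (false,true,false); (true,false,false); (true,true,false)]), [:: 0; 4410; 0]);
  (([::], [:: (false,false,false); (false,false,true); (false,true,false); (true,false,false); (true,false,true); (true,true,false)]), [:: 0; 0; 0]);
  (([::], [:: (false,false,false); (false,false,true); (false,true,true); (true,false,false); (true,false,true); (true,true,true)]), [:: 0; 0; 0]);
  (([::], [:: (false,false,false); (false,true,false); (false,true,true); (true,false,false); (true,true,false); (true,true,true)]), [:: 0; 0; 0]);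
  (([::], [:: (false,false,true); (false,true,false); (false,true,true); (true,false,true); (true,true,false); (true,true,true)]), [:: 0; 0; 0]);
  (([::], [:: (false,false,false); (false,false,true); (false,true,false); (false,true,true); (true,false,false); (true,true,false)]), [:: 0; 0; 0]);
  (([::], [:: (false,false,false); (false,false,true); (false,true,false); (false,true,true); (true,false,true); (true,true,true)]), [:: 0; 0; 0]);
  (([::], [:: (false,false,false); (false,true,false); (true,false,false); (true,false,true); (true,true,false); (true,true,true)]), [:: 0; 0; 0]);
  (([::], [:: (false,false,true); (false,true,true); (true,false,false); (true,false,true); (true,true,false); (true,true,true)]), [:: 0; 0; 0]);
  (([::], [:: (false,false,false); (false,false,true); (false,true,false); (false,true,true); (true,false,false); (true,false,true)]), [:: 0; 0; 0]);
  (([::], [:: (false,false,false); (false,false,true); (false,true,false); (false,true,true); (true,true,false); (true,true,true)]), [:: 0; 0; 0]);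
  (([::], [:: (false,false,false); (false,false,true); (true,false,false); (true,false,true); (true,true,false); (true,true,true)]), [:: 0; 0; 0]);
  (([::], [:: (false,true,false); (false,true,true); (true,false,false); (true,false,true); (true,true,false); (true,true,true)]), [:: 0; 0; 0]);
  (([::], [:: (false,false,false); (false,false,true); (false,true,false); (false,true,true); (true,false,true); (true,true,false); (true,true,true)]), [:: 0; 0; 0]);
  (([::], [:: (false,false,true); (false,true,false); (false,true,true); (true,false,false); (true,false,true); (true,true,false); (true,true,true)]), [:: 0; 0; 0]);
  (([::], [:: (false,false,false); (false,false,true); (false,true,false); (false,true,true); (true,false,false); (true,true,false); (true,true,true)]), [:: 0; 0; 0]);
  (([::], [:: (false,false,false); (false,true,false); (false,true,true); (true,false,false); (true,false,true); (true,true,false); (true,true,true)]), [:: 0; 0; 0]);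
  (([::], [:: (false,false,false); (false,false,true); (false,true,false); (false,true,true); (true,false,false); (true,false,true); (true,true,true)]), [:: 0; 0; 0]);
  (([::], [:: (false,false,false); (false,false,true); (false,true,true); (true,false,false); (true,false,true); (true,true,false); (true,true,true)]), [:: 0; 0; 0]);
  (([::], [:: (false,false,false); (false,false,true); (false,true,false); (false,true,true); (true,false,false); (true,false,true); (true,true,false)]), [:: 0; 0; 0]);
  (([::], [:: (false,false,false); (false,false,true); (false,true,false); (true,false,false); (true,false,true); (true,true,false); (true,true,true)]), [:: 0; 0; 0]);
  (([:: (false,true,false); (true,false,false); (true,true,false)], [::]), [:: 315; 0; -2520]);
  (([:: (false,false,false); (false,true,false); (true,false,false); (true,true,false)], [::]), [:: 0; 0; 0]);
  (([:: (false,false,false); (false,false,true); (false,true,false); (false,true,true); (true,false,false); (true,false,true)], [::]), [:: 0; 0; 0]);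
  (([:: (false,true,false); (false,true,true); (true,true,false); (true,true,true)], [::]), [:: 0; 0; 0]);
  (([:: (true,false,false); (true,false,true); (true,true,false); (true,true,true)], [::]), [:: 0; 0; 0]);
  (([:: (true,true,false)], [::]), [:: 2520; 0; -2520]);
  (([:: (false,true,false); (false,true,true); (true,false,false); (true,false,true); (true,true,false); (true,true,true)], [::]), [:: 0; 0; 0]);
  (([:: (false,false,false); (false,false,true); (false,true,false); (false,true,true); (true,true,false); (true,true,true)], [::]), [:: 0; 0; 0]);
  (([:: (false,false,false); (false,false,true); (true,false,false); (true,false,true); (true,true,false); (true,true,true)], [::]), [:: 0; 0; 0]);
  (([:: (false,false,false); (false,false,true); (false,true,false); (false,true,true); (true,false,false); (true,true,false)], [::]), [:: 0; 0; 0]);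
  (([:: (false,false,false); (false,false,true); (false,true,false); (false,true,true); (true,false,true); (true,true,true)], [::]), [:: 0; 0; 0]);
  (([:: (false,false,false); (false,false,true); (false,true,false); (true,false,false); (true,false,true); (true,true,false)], [::]), [:: 0; 0; 0]);
  (([:: (false,false,false); (false,false,true); (false,true,true); (true,false,false); (true,false,true); (true,true,true)], [::]), [:: 0; 0; 0]);
  (([:: (false,false,false); (false,true,false); (false,true,true); (true,false,false); (true,false,true); (true,true,false); (true,true,true)], [::]), [:: 0; 0; 0]);
  (([:: (false,false,true); (false,true,false); (false,true,true); (true,false,false); (true,false,true); (true,true,false); (true,true,true)], [::]), [:: 0; 0; 0]);
  (([:: (false,false,false); (false,true,false); (true,false,false); (true,false,true); (true,true,false); (true,true,true)], [::]), [:: 0; 0; 0]);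
  (([:: (false,false,true); (false,true,true); (true,false,false); (true,false,true); (true,true,false); (true,true,true)], [::]), [:: 0; 0; 0]);
  (([:: (false,false,false); (false,true,false); (false,true,true); (true,false,false); (true,true,false); (true,true,true)], [::]), [:: 0; 0; 0]);
  (([:: (false,false,true); (false,true,false); (false,true,true); (true,false,true); (true,true,false); (true,true,true)], [::]), [:: 0; 0; 0]);
  (([:: (false,false,false); (false,false,true); (false,true,false); (false,true,true); (true,false,false); (true,false,true); (true,true,false)], [::]), [:: 0; 0; 0]);
  (([:: (false,false,false); (false,false,true); (false,true,false); (false,true,true); (true,false,false); (true,false,true); (true,true,true)], [::]), [:: 0; 0; 0]);
  (([:: (false,false,false); (false,false,true); (false,true,false); (true,false,false); (true,false,true); (true,true,false); (true,true,true)], [::]), [:: 0; 0; 0]);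
  (([:: (false,false,false); (false,false,true); (false,true,true); (true,false,false); (true,false,true); (true,true,false); (true,true,true)], [::]), [:: 0; 0; 0]);
  (([:: (false,false,false); (false,false,true); (false,true,false); (false,true,true); (true,false,false); (true,true,false); (true,true,true)], [::]), [:: 0; 0; 0]);
  (([:: (false,false,false); (false,false,true); (false,true,false); (false,true,true); (true,false,true); (true,true,false); (true,true,true)], [::]), [:: 0; 0; 0]);
  (([::], [:: (false,true,false); (true,false,false); (true,true,false)]), [:: 315; 3675; 420]);
  (([::], [:: (false,true,false); (false,true,true); (true,true,false); (true,true,true)]), [:: 0; 0; 0]);
  (([::], [:: (true,false,false); (true,false,true); (true,true,false); (true,true,true)]), [:: 0; 0; 0]);
  (([::], [:: (true,true,false)]), [:: 2520; 1470; 420]);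
  (([::], [:: (false,false,false); (false,true,false); (true,false,false)]), [:: 315; 3675; 420]);
  (([:: (false,false,false); (true,false,false)], [::]), [:: 630; 0; -5040]);
  (([:: (false,false,false)], [::]), [:: 2520; 0; -2520]);
  (([:: (false,false,false); (false,false,true); (true,false,false); (true,false,true)], [::]), [:: 0; 0; 0]);
  (([:: (false,false,false); (false,false,true); (false,true,false); (false,true,true)], [::]), [:: 0; 0; 0]);
  (([:: (true,false,false)], [::]), [:: 2520; 0; -2520]);
  (([::], [:: (false,false,false); (true,false,false); (true,true,false)]), [:: 315; 3675; 420]);
  (([::], [:: (true,false,false)]), [:: 2520; 1470; 420]);
  (([:: (false,false,false)], [:: (false,false,false)]), [:: 2520; 0; -2520]);
  (([:: (false,false,false); (false,false,true); (false,true,false); (false,true,true)], [:: (false,false,false); (false,false,true); (false,true,false); (false,true,true)]), [:: 0; 0; 0]);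
  (([:: (false,false,false); (false,false,true); (true,false,false); (true,false,true)], [:: (false,false,false); (false,false,true); (true,false,false); (true,false,true)]), [:: 0; 0; 0]);
  (([:: (false,false,false); (false,true,false); (true,false,false); (true,true,false)], [:: (false,false,false); (false,true,false); (true,false,false); (true,true,false)]), [:: 0; 0; 0]);
  (([:: (false,false,false); (false,false,true); (false,true,false); (true,false,false); (true,false,true); (true,true,false)], [:: (false,false,false); (false,false,true); (false,true,false); (true,false,false); (true,false,true); (true,true,false)]), [:: 0; 0; 0]);
  (([:: (false,false,false); (false,false,true); (false,true,true); (true,false,false); (true,false,true); (true,true,true)], [:: (false,false,false); (false,false,true); (false,true,true); (true,false,false); (true,false,true); (true,true,true)]), [:: 0; 0; 0]);
  (([:: (false,false,false); (false,true,false); (false,true,true); (true,false,false); (true,true,false); (true,true,true)], [:: (false,false,false); (false,true,false); (false,true,true); (true,false,false); (true,true,false); (true,true,true)]), [:: 0; 0; 0]);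
  (([:: (false,false,true); (false,true,false); (false,true,true); (true,false,true); (true,true,false); (true,true,true)], [:: (false,false,true); (false,true,false); (false,true,true); (true,false,true); (true,true,false); (true,true,true)]), [:: 0; 0; 0]);
  (([:: (false,false,false); (false,false,true); (false,true,false); (false,true,true); (true,false,false); (true,true,false)], [:: (false,false,false); (false,false,true); (false,true,false); (false,true,true); (true,false,false); (true,true,false)]), [:: 0; 0; 0]);
  (([:: (false,false,false); (false,false,true); (false,true,false); (false,true,true); (true,false,true); (true,true,true)], [:: (false,false,false); (false,false,true); (false,true,false); (false,true,true); (true,false,true); (true,true,true)]), [:: 0; 0; 0]);
  (([:: (false,false,false); (false,true,false); (true,false,false); (true,false,true); (true,true,false); (true,true,true)], [:: (false,false,false); (false,true,false); (true,false,false); (true,false,true); (true,true,false); (true,true,true)]), [:: 0; 0; 0]);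
  (([:: (false,false,true); (false,true,true); (true,false,false); (true,false,true); (true,true,false); (true,true,true)], [:: (false,false,true); (false,true,true); (true,false,false); (true,false,true); (true,true,false); (true,true,true)]), [:: 0; 0; 0]);
  (([:: (false,false,false); (false,false,true); (false,true,false); (false,true,true); (true,false,false); (true,false,true)], [:: (false,false,false); (false,false,true); (false,true,false); (false,true,true); (true,false,false); (true,false,true)]), [:: 0; 0; 0]);
  (([:: (false,false,false); (false,false,true); (false,true,false); (false,true,true); (true,true,false); (true,true,true)], [:: (false,false,false); (false,false,true); (false,true,false); (false,true,true); (true,true,false); (true,true,true)]), [:: 0; 0; 0]);
  (([:: (false,false,false); (false,false,true); (true,false,false); (true,false,true); (true,true,false); (true,true,true)], [:: (false,false,false); (false,false,true); (true,false,false); (true,false,true); (true,true,false); (true,true,true)]), [:: 0; 0; 0]);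
  (([:: (false,true,false); (false,true,true); (true,false,false); (true,false,true); (true,true,false); (true,true,true)], [:: (false,true,false); (false,true,true); (true,false,false); (true,false,true); (true,true,false); (true,true,true)]), [:: 0; 0; 0]);
  (([:: (false,false,false); (false,false,true); (false,true,false); (false,true,true); (true,false,true); (true,true,false); (true,true,true)], [:: (false,false,false); (false,false,true); (false,true,false); (false,true,true); (true,false,true); (true,true,false); (true,true,true)]), [:: 0; 0; 0]);
  (([:: (false,false,true); (false,true,false); (false,true,true); (true,false,false); (true,false,true); (true,true,false); (true,true,true)], [:: (false,false,true); (false,true,false); (false,true,true); (true,false,false); (true,false,true); (true,true,false); (true,true,true)]), [:: 0; 0; 0]);
  (([:: (false,false,false); (false,false,true); (false,true,false); (false,true,true); (true,false,false); (true,true,false); (true,true,true)], [:: (false,false,false); (false,false,true); (false,true,false); (false,true,true); (true,false,false); (true,true,false); (true,true,true)]), [:: 0; 0; 0]);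
  (([:: (false,false,false); (false,true,false); (false,true,true); (true,false,false); (true,false,true); (true,true,false); (true,true,true)], [:: (false,false,false); (false,true,false); (false,true,true); (true,false,false); (true,false,true); (true,true,false); (true,true,true)]), [:: 0; 0; 0]);
  (([:: (false,false,false); (false,false,true); (false,true,false); (false,true,true); (true,false,false); (true,false,true); (true,true,true)], [:: (false,false,false); (false,false,true); (false,true,false); (false,true,true); (true,false,false); (true,false,true); (true,true,true)]), [:: 0; 0; 0]);
  (([:: (false,false,false); (false,false,true); (false,true,true); (true,false,false); (true,false,true); (true,true,false); (true,true,true)], [:: (false,false,false); (false,false,true); (false,true,true); (true,false,false); (true,false,true); (true,true,false); (true,true,true)]), [:: 0; 0; 0]);
  (([:: (false,false,false); (false,false,true); (false,true,false); (false,true,true); (true,false,false); (true,false,true); (true,true,false)], [:: (false,false,false); (false,false,true); (false,true,false); (false,true,true); (true,false,false); (true,false,true); (true,true,false)]), [:: 0; 0; 0]);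
  (([:: (false,false,false); (false,false,true); (false,true,false); (true,false,false); (true,false,true); (true,true,false); (true,true,true)], [:: (false,false,false); (false,false,true); (false,true,false); (true,false,false); (true,false,true); (true,true,false); (true,true,true)]), [:: 0; 0; 0]);
  (([:: (false,false,false); (true,false,false); (true,true,false)], [::]), [:: 315; 0; -2520]);
  (([::], [:: (false,false,false); (false,true,false); (true,true,false)]), [:: 315; 3675; 420]);
  (([::], [:: (false,true,false)]), [:: 2520; 1470; 420]);
  (([::], [:: (false,false,false); (false,true,false)]), [:: 630; 2940; 840]);
  (([::], [:: (false,false,false); (true,false,false)]), [:: 630; 2940; 840]);
  (([:: (false,false,false); (false,true,false); (true,false,false)], [::]), [:: 315; 0; -2520]);
  (([:: (false,false,false); (false,true,false); (true,true,false)], [::]), [:: 315; 0; -2520]);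
  (([:: (false,true,false)], [::]), [:: 2520; 0; -2520]);
  (([:: (false,false,false); (false,true,false)], [::]), [:: 630; 0; -5040])].
Definition tabL : seq (PS * seq int) := [::
  (([:: (false,false,false)], [:: (false,false,true)]), [:: 684; 1827; -180; 1050; -1225; -3500; -504; 588; 1680; -600; 280; -100]);
  (([:: (false,false,false)], [::]), [:: 2547; 0; -216; 525; 0; -4200; -252; 0; 2016; -300; 0; -120]);
  (([::], [:: (false,false,true)]), [:: 2547; 1827; 36; 525; -1225; 700; -252; 588; -336; -300; 280; 20]);
  (([::], [:: (false,false,false); (false,false,true); (false,true,false); (false,true,true)]), [:: 63; 4263; 84; 630; -1470; 840; -168; 392; -224; 0; 0; 0]);
  (([:: (false,false,false); (false,false,true); (false,true,false); (false,true,true)], [::]), [:: 63; 0; -504; 630; 0; -5040; -168; 0; 1344; 0; 0; 0]);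
  (([::], [:: (false,false,false); (false,false,true); (true,false,false); (true,false,true)]), [:: 63; 4263; 84; 630; -1470; 840; -168; 392; -224; 0; 0; 0]);
  (([:: (false,false,false); (false,false,true); (true,false,false); (true,false,true)], [::]), [:: 63; 0; -504; 630; 0; -5040; -168; 0; 1344; 0; 0; 0]);
  (([:: (false,false,false); (false,true,false); (true,false,false); (true,true,false)], [::]), [:: 63; 0; -504; 315; 0; -2520; -168; 0; 1344; 0; 0; 0]);
  (([::], [:: (false,false,true); (false,true,true); (true,false,true); (true,true,true)]), [:: 63; 4263; 84; 315; -735; 420; -168; 392; -224; 0; 0; 0]);
  (([::], [::]), [:: 4410; 0; 0; 0; 0; 0; 0; 0; 0; 0; 0; 0]);
  (([::], [:: (false,false,false); (false,false,true); (false,true,false); (true,false,false); (true,false,true); (true,true,false)]), [:: 63; 4263; 84; 0; 0; 0; 42; -98; 56; 0; 0; 0]);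
  (([::], [:: (false,false,false); (false,false,true); (false,true,true); (true,false,false); (true,false,true); (true,true,true)]), [:: 63; 4263; 84; 0; 0; 0; 42; -98; 56; 0; 0; 0]);
  (([::], [:: (false,false,false); (false,true,false); (false,true,true); (true,false,false); (true,true,false); (true,true,true)]), [:: 63; 4263; 84; 0; 0; 0; 42; -98; 56; 0; 0; 0]);
  (([::], [:: (false,false,true); (false,true,false); (false,true,true); (true,false,true); (true,true,false); (true,true,true)]), [:: 63; 4263; 84; 0; 0; 0; 42; -98; 56; 0; 0; 0]);
  (([:: (false,false,false); (false,false,true); (false,true,false); (true,false,false); (true,false,true); (true,true,false)], [::]), [:: 63; 0; -504; 0; 0; 0; 42; 0; -336; 0; 0; 0]);
  (([:: (false,false,false); (false,false,true); (false,true,true); (true,false,false); (true,false,true); (true,true,true)], [::]), [:: 63; 0; -504; 0; 0; 0; 42; 0; -336; 0; 0; 0]);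
  (([:: (false,false,false); (false,true,false); (false,true,true); (true,false,false); (true,true,false); (true,true,true)], [::]), [:: 63; 0; -504; 0; 0; 0; 42; 0; -336; 0; 0; 0]);
  (([:: (false,false,true); (false,true,false); (false,true,true); (true,false,true); (true,true,false); (true,true,true)], [::]), [:: 63; 0; -504; 0; 0; 0; 42; 0; -336; 0; 0; 0]);
  (([::], [:: (false,false,false); (false,false,true); (false,true,false); (false,true,true); (true,false,false); (true,true,false)]), [:: 63; 4263; 84; 0; 0; 0; 42; -98; 56; 0; 0; 0]);
  (([::], [:: (false,false,false); (false,false,true); (false,true,false); (false,true,true); (true,false,true); (true,true,true)]), [:: 63; 4263; 84; 0; 0; 0; 42; -98; 56; 0; 0; 0]);
  (([::], [:: (false,false,false); (false,true,false); (true,false,false); (true,false,true); (true,true,false); (true,true,true)]), [:: 63; 4263; 84; 0; 0; 0; 42; -98; 56; 0; 0; 0]);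
  (([::], [:: (false,false,true); (false,true,true); (true,false,false); (true,false,true); (true,true,false); (true,true,true)]), [:: 63; 4263; 84; 0; 0; 0; 42; -98; 56; 0; 0; 0]);
  (([:: (false,false,false); (false,false,true); (false,true,false); (false,true,true); (true,false,false); (true,true,false)], [::]), [:: 63; 0; -504; 0; 0; 0; 42; 0; -336; 0; 0; 0]);
  (([:: (false,false,false); (false,false,true); (false,true,false); (false,true,true); (true,false,true); (true,true,true)], [::]), [:: 63; 0; -504; 0; 0; 0; 42; 0; -336; 0; 0; 0]);
  (([:: (false,false,false); (false,true,false); (true,false,false); (true,false,true); (true,true,false); (true,true,true)], [::]), [:: 63; 0; -504; 0; 0; 0; 42; 0; -336; 0; 0; 0]);
  (([:: (false,false,true); (false,true,true); (true,false,false); (true,false,true); (true,true,false); (true,true,true)], [::]), [:: 63; 0; -504; 0; 0; 0; 42; 0; -336; 0; 0; 0]);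
  (([:: (false,false,false); (false,false,true); (false,true,false); (false,true,true); (true,false,false); (true,false,true)], [::]), [:: 63; 0; -504; 0; 0; 0; 42; 0; -336; 0; 0; 0]);
  (([:: (false,false,false); (false,false,true); (false,true,false); (false,true,true); (true,true,false); (true,true,true)], [::]), [:: 63; 0; -504; 0; 0; 0; 42; 0; -336; 0; 0; 0]);
  (([:: (false,false,false); (false,false,true); (true,false,false); (true,false,true); (true,true,false); (true,true,true)], [::]), [:: 63; 0; -504; 0; 0; 0; 42; 0; -336; 0; 0; 0]);
  (([:: (false,true,false); (false,true,true); (true,false,false); (true,false,true); (true,true,false); (true,true,true)], [::]), [:: 63; 0; -504; 0; 0; 0; 42; 0; -336; 0; 0; 0]);
  (([::], [:: (false,false,false); (false,false,true); (false,true,false); (false,true,true); (true,false,false); (true,false,true)]), [:: 63; 4263; 84; 0; 0; 0; 42; -98; 56; 0; 0; 0]);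
  (([::], [:: (false,false,false); (false,false,true); (false,true,false); (false,true,true); (true,true,false); (true,true,true)]), [:: 63; 4263; 84; 0; 0; 0; 42; -98; 56; 0; 0; 0]);
  (([::], [:: (false,false,false); (false,false,true); (true,false,false); (true,false,true); (true,true,false); (true,true,true)]), [:: 63; 4263; 84; 0; 0; 0; 42; -98; 56; 0; 0; 0]);
  (([::], [:: (false,true,false); (false,true,true); (true,false,false); (true,false,true); (true,true,false); (true,true,true)]), [:: 63; 4263; 84; 0; 0; 0; 42; -98; 56; 0; 0; 0]);
  (([::], [:: (false,false,false); (false,false,true); (false,true,false); (false,true,true); (true,false,true); (true,true,false); (true,true,true)]), [:: 63; 4263; 84; 0; 0; 0; -63; 147; -84; 0; 0; 0]);
  (([::], [:: (false,false,true); (false,true,false); (false,true,true); (true,false,false); (true,false,true); (true,true,false); (true,true,true)]), [:: 63; 4263; 84; 0; 0; 0; -63; 147; -84; 0; 0; 0]);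
  (([::], [:: (false,false,false); (false,false,true); (false,true,false); (false,true,true); (true,false,false); (true,true,false); (true,true,true)]), [:: 63; 4263; 84; 0; 0; 0; -63; 147; -84; 0; 0; 0]);
  (([::], [:: (false,false,false); (false,true,false); (false,true,true); (true,false,false); (true,false,true); (true,true,false); (true,true,true)]), [:: 63; 4263; 84; 0; 0; 0; -63; 147; -84; 0; 0; 0]);
  (([::], [:: (false,false,false); (false,false,true); (false,true,false); (false,true,true); (true,false,false); (true,false,true); (true,true,true)]), [:: 63; 4263; 84; 0; 0; 0; -63; 147; -84; 0; 0; 0]);
  (([::], [:: (false,false,false); (false,false,true); (false,true,true); (true,false,false); (true,false,true); (true,true,false); (true,true,true)]), [:: 63; 4263; 84; 0; 0; 0; -63; 147; -84; 0; 0; 0]);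
  (([::], [:: (false,false,false); (false,false,true); (false,true,false); (false,true,true); (true,false,false); (true,false,true); (true,true,false)]), [:: 63; 4263; 84; 0; 0; 0; -63; 147; -84; 0; 0; 0]);
  (([::], [:: (false,false,false); (false,false,true); (false,true,false); (true,false,false); (true,false,true); (true,true,false); (true,true,true)]), [:: 63; 4263; 84; 0; 0; 0; -63; 147; -84; 0; 0; 0]);
  (([:: (false,false,false); (false,false,true); (false,true,false); (false,true,true); (true,false,true); (true,true,false); (true,true,true)], [::]), [:: 63; 0; -504; 0; 0; 0; -63; 0; 504; 0; 0; 0]);
  (([:: (false,false,true); (false,true,false); (false,true,true); (true,false,false); (true,false,true); (true,true,false); (true,true,true)], [::]), [:: 63; 0; -504; 0; 0; 0; -63; 0; 504; 0; 0; 0]);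
  (([:: (false,false,false); (false,false,true); (false,true,false); (false,true,true); (true,false,false); (true,true,false); (true,true,true)], [::]), [:: 63; 0; -504; 0; 0; 0; -63; 0; 504; 0; 0; 0]);
  (([:: (false,false,false); (false,true,false); (false,true,true); (true,false,false); (true,false,true); (true,true,false); (true,true,true)], [::]), [:: 63; 0; -504; 0; 0; 0; -63; 0; 504; 0; 0; 0]);
  (([:: (false,false,false); (false,false,true); (false,true,false); (false,true,true); (true,false,false); (true,false,true); (true,true,true)], [::]), [:: 63; 0; -504; 0; 0; 0; -63; 0; 504; 0; 0; 0]);
  (([:: (false,false,false); (false,false,true); (false,true,true); (true,false,false); (true,false,true); (true,true,false); (true,true,true)], [::]), [:: 63; 0; -504; 0; 0; 0; -63; 0; 504; 0; 0; 0]);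
  (([:: (false,false,false); (false,false,true); (false,true,false); (false,true,true); (true,false,false); (true,false,true); (true,true,false)], [::]), [:: 63; 0; -504; 0; 0; 0; -63; 0; 504; 0; 0; 0]);
  (([:: (false,false,false); (false,false,true); (false,true,false); (true,false,false); (true,false,true); (true,true,false); (true,true,true)], [::]), [:: 63; 0; -504; 0; 0; 0; -63; 0; 504; 0; 0; 0])].
Definition sumZ (f : st -> int) : int := foldr (fun l acc => f l + acc) 0 allst.
Definition keysH := map fst tabH.
Definition keysL := map fst tabL.
Definition cH (Q : PS) (j : nat) : int := nth 0 (nth [::] (map snd tabH) (index Q keysH)) j.
Definition cL (P : PS) (j : nat) : int := nth 0 (nth [::] (map snd tabL) (index P keysL)) j.
Definition lam (i : nat) : int := nth 0 [:: 8; 4; 3; 1] i.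
Definition mu (j : nat) : int := nth 0 [:: 8; 4; 1] j.

Definition checkH : bool :=
  all (fun Q => all (fun l => reach2 Q l \in keysH) allst
     && all (fun j => sumZ (fun l => cH (reach2 Q l) j) == mu j * cH Q j) (iota 0 3)
     && ((H 1 Q)%:R * 4410 == cH Q 0 * 8 + cH Q 1 * 4 + cH Q 2)) keysH.
Lemma checkH_ok : checkH. Proof. by vm_compute. Qed.
Definition checkL : bool :=
  all (fun P => all (fun l => reach2 P l \in keysL) allst
     && all (fun l => reset2 (reach2 P l) \in keysH) allst
     && all (fun i => all (fun j => sumZ (fun l => cL (reach2 P l) (3*i+j)) == lam i * cL P (3*i+j)) (iota 0 3)) (iota 0 4)
     && all (fun j => cL P j * 8 + cL P (3+j) * 4 + cL P (6+j) * 3 + cL P (9+j) == sumZ (fun l => cH (reset2 (reach2 P l)) j)) (iota 0 3)) keysL.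
Lemma checkL_ok : checkL. Proof. by vm_compute. Qed.
Lemma Pinit_in : Pinit \in keysL. Proof. by vm_compute. Qed.
Lemma sumZ_add (f g : st -> int) : sumZ (fun l => f l + g l) = sumZ f + sumZ g.
Proof. rewrite /sumZ /=; ring. Qed.
Lemma sumZ_mulr (f : st -> int) K : sumZ (fun l => f l * K) = sumZ f * K.
Proof. rewrite /sumZ /=; ring. Qed.
Lemma sumZ_ext (f g : st -> int) : (forall l, f l = g l) -> sumZ f = sumZ g.
Proof. by move=> e; rewrite /sumZ /= !e. Qed.
Lemma sumZ_big k (F : st -> nat -> int) :
  sumZ (fun l => \sum_(i < k) F l i) = \sum_(i < k) sumZ (fun l => F l i).
Proof.
elim: k => [|k IH]; first by rewrite /sumZ /= !big_ord0; ring.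
rewrite big_ord_recr /= -IH -sumZ_add; apply: sumZ_ext => l; by rewrite big_ord_recr.
Qed.
Lemma sumL_Z (f : st -> nat) : ((sumL f)%:R : int) = sumZ (fun l => (f l)%:R).
Proof. by rewrite /sumL /sumZ /= !natrD. Qed.

Definition cfH (Q : PS) (r : nat) : int := \sum_(j < 3) cH Q j * mu j ^+ r.
Definition cfL (P : PS) (m r : nat) : int :=
  \sum_(i < 4) \sum_(j < 3) cL P (3*i+j) * lam i ^+ m * mu j ^+ r.

Lemma checkH_Q Q : Q \in keysH ->
  [/\ forall l, reach2 Q l \in keysH,
      forall j, (j < 3)%N -> sumZ (fun l => cH (reach2 Q l) j) = mu j * cH Q j &
      (H 1 Q)%:R * 4410 = cH Q 0 * 8 + cH Q 1 * 4 + cH Q 2].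
Proof.
move=> hQ; have /allP/(_ Q hQ) := checkH_ok; case/andP=> /andP[h1 h2] /eqP h3.
split=> //.
- by move=> l; apply: (allP h1); case: l => [[[] []] []].
- move=> j hj; apply/eqP; apply: (allP h2); by rewrite mem_iota.
Qed.

Lemma H_cf r Q : (0 < r)%N -> Q \in keysH -> (H r Q)%:R * 4410 = cfH Q r.
Proof.
case: r => // r _; elim: r Q => [|r IH] Q hQ; have [h1 h2 h3] := checkH_Q hQ.
  by rewrite h3 /cfH !big_ord_recr big_ord0 /= !expr1 add0r /mu /= mulr1.
rewrite -[H r.+2 Q]/(sumL (fun l => H r.+1 (reach2 Q l))) sumL_Z -sumZ_mulr.
rewrite (sumZ_ext (g := fun l => cfH (reach2 Q l) r.+1)); last by move=> l; rewrite IH.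
rewrite /cfH (sumZ_big 3 (fun l j => cH (reach2 Q l) j * mu j ^+ r.+1)); apply: eq_bigr => j _.
by rewrite sumZ_mulr h2 // !exprS; ring.
Qed.

Lemma checkL_P P : P \in keysL ->
  [/\ forall l, reach2 P l \in keysL,
      forall l, reset2 (reach2 P l) \in keysH,
      forall i j, (i < 4)%N -> (j < 3)%N ->
        sumZ (fun l => cL (reach2 P l) (3*i+j)) = lam i * cL P (3*i+j) &
      forall j, (j < 3)%N -> cL P j * 8 + cL P (3+j) * 4 + cL P (6+j) * 3 + cL P (9+j)
                = sumZ (fun l => cH (reset2 (reach2 P l)) j)].
Proof.
move=> hP; have /allP/(_ P hP) := checkL_ok; case/andP=> /andP[/andP[h1 h2] h3] h4.
split.
- by move=> l; apply: (allP h1); case: l => [[[] []] []].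
- by move=> l; apply: (allP h2); case: l => [[[] []] []].
- move=> i j hi hj; apply/eqP.
  have := allP h3 i; rewrite mem_iota add0n => /(_ hi) /allP /(_ j).
  by rewrite mem_iota add0n; apply.
- move=> j hj; apply/eqP; apply: (allP h4); by rewrite mem_iota.
Qed.

Lemma L_cf m r P : (0 < m)%N -> (0 < r)%N -> P \in keysL -> (L m r P)%:R * 4410 = cfL P m r.
Proof.
case: m => // m _ hr; elim: m P => [|m IH] P hP; have [h1 h2 h3 h4] := checkL_P hP.
  rewrite -[L 1 r P]/(sumL (fun l => H r (reset2 (reach2 P l)))) sumL_Z -sumZ_mulr.
  rewrite (sumZ_ext (g := fun l => cfH (reset2 (reach2 P l)) r)); last by move=> l; rewrite H_cf.
  rewrite /cfH (sumZ_big 3 (fun l j => cH (reset2 (reach2 P l)) j * mu j ^+ r)).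
  rewrite /cfL exchange_big /=; apply: eq_bigr => j _.
  rewrite sumZ_mulr -h4 //.
  rewrite !big_ord_recr big_ord0 /= /lam /=; ring.
rewrite -[L m.+2 r P]/(sumL (fun l => L m.+1 r (reach2 P l))) sumL_Z -sumZ_mulr.
rewrite (sumZ_ext (g := fun l => cfL (reach2 P l) m.+1 r)); last by move=> l; rewrite IH.
rewrite /cfL (sumZ_big 4 (fun l i => \sum_(j < 3) cL (reach2 P l) (3*i+j) * lam i ^+ m.+1 * mu j ^+ r)).
apply: eq_bigr => i _.
rewrite (sumZ_big 3 (fun l j => cL (reach2 P l) (3*i+j) * lam i ^+ m.+1 * mu j ^+ r)).
apply: eq_bigr => j _.
rewrite (sumZ_ext (g := fun l => cL (reach2 P l) (3*i+j) * (lam i ^+ m.+1 * mu j ^+ r))); last by move=> l; rewrite mulrA.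
by rewrite sumZ_mulr h3 // !exprS; ring.
Qed.

Lemma cfL_Pinit m r : cfL Pinit m r =
  684 * 8 ^+ m * 8 ^+ r + 1827 * 8 ^+ m * 4 ^+ r - 180 * 8 ^+ m
  + 1050 * 4 ^+ m * 8 ^+ r - 1225 * 4 ^+ m * 4 ^+ r - 3500 * 4 ^+ m
  - 504 * 3 ^+ m * 8 ^+ r + 588 * 3 ^+ m * 4 ^+ r + 1680 * 3 ^+ m
  - 600 * 8 ^+ r + 280 * 4 ^+ r - 100.
Proof.
have e0 : cL Pinit 0 = 684 by vm_compute.
have e1 : cL Pinit 1 = 1827 by vm_compute.
have e2 : cL Pinit 2 = -180 by vm_compute.
have e3 : cL Pinit 3 = 1050 by vm_compute.
have e4 : cL Pinit 4 = -1225 by vm_compute.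
have e5 : cL Pinit 5 = -3500 by vm_compute.
have e6 : cL Pinit 6 = -504 by vm_compute.
have e7 : cL Pinit 7 = 588 by vm_compute.
have e8 : cL Pinit 8 = 1680 by vm_compute.
have e9 : cL Pinit 9 = -600 by vm_compute.
have e10 : cL Pinit 10 = 280 by vm_compute.
have e11 : cL Pinit 11 = -100 by vm_compute.
rewrite /cfL !big_ord_recr !big_ord0 /= /lam /mu /=.
rewrite e0 e1 e2 e3 e4 e5 e6 e7 e8 e9 e10 e11 !expr1n; ring.
Qed.

Lemma pow_le (a b : int) n : 0 <= a -> a <= b -> a ^+ n <= b ^+ n.
Proof. move=> ha hb; apply: lerXn2r; rewrite ?nnegrE //; exact: le_trans hb. Qed.

Lemma ineq_cf m r : (1 <= m)%N -> (2 <= r)%N -> (5 <= m + r)%N ->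
  cfL Pinit m r < cfL Pinit (m + r).-1 1.
Proof.
move=> hm hr hmr.
have e8 : (8 : int) ^+ (m + r).-1 * 8 = 8 ^+ m * 8 ^+ r.
  by rewrite -exprSr prednK ?exprD //; lia.
have -> : cfL Pinit (m + r).-1 1 = 1575 * (8 ^+ m * 8 ^+ r) - 3780.
  rewrite cfL_Pinit !expr1 -e8; ring.
clear e8.
have hXA : 8 * 8 * 8 * 8 * 8 <= (8 : int) ^+ m * 8 ^+ r.
  rewrite -exprD; have e5 : (8 : int) ^+ 5 = 8 * 8 * 8 * 8 * 8 by rewrite !exprS expr0 mulr1 !mulrA.
  have : (8 : int) ^+ 5 <= 8 ^+ (m + r) by rewrite ler_eXn2l //; lia.
  rewrite e5; lia.
have hYX : (4 : int) ^+ m * 2 <= 8 ^+ m.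
  case: (m) hm => // m' _; have := @pow_le 4 8 m' isT isT; rewrite !exprS; lia.
have hZY : (3 : int) ^+ m <= 4 ^+ m by apply: pow_le.
have hBA : (4 : int) ^+ r * 4 <= 8 ^+ r.
  case: (r) hr => // [[//|r']] _; have := @pow_le 4 8 r' isT isT; rewrite !exprS; lia.
rewrite cfL_Pinit.
have hZ0 : (0 : int) <= 3 ^+ m by rewrite exprn_ge0.
have hB0 : (0 : int) <= 4 ^+ r by rewrite exprn_ge0.
have hY0 : (0 : int) <= 4 ^+ m by rewrite exprn_ge0.
have hX0 : (0 : int) <= 8 ^+ m by rewrite exprn_ge0.
have hA0 : (0 : int) <= 8 ^+ r by rewrite exprn_ge0.
move: hXA hYX hZY hBA hZ0 hB0 hY0 hX0 hA0.
have [r2|r3] : r = 2%N \/ (3 <= r)%N by lia.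
- have hYX8 : (4 : int) ^+ m * 8 <= 8 ^+ m.
    have hm3 : (3 <= m)%N by lia.
    case: (m) hm3 => [|[|[|m']]] // _.
    have := @pow_le 4 8 m' isT isT; rewrite !exprS; lia.
  move: hYX8; rewrite r2 /=.
  set X := (8 : int) ^+ m; set Y := (4 : int) ^+ m; set Z := (3 : int) ^+ m.
  move=> *; nia.
- have hBA8 : (4 : int) ^+ r * 8 <= 8 ^+ r.
    case: (r) r3 => [|[|[|r']]] // _; have := @pow_le 4 8 r' isT isT; rewrite !exprS; lia.
  move: hBA8.
  set X := (8 : int) ^+ m; set Y := (4 : int) ^+ m; set Z := (3 : int) ^+ m.
  set A := (8 : int) ^+ r; set B := (4 : int) ^+ r.
  move=> hBA8 hXA hYX hZY hBA hZ0 hB0 hY0 hX0 hA0.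
  have P1 : X * B * 8 <= X * A by rewrite -mulrA; apply: ler_wpM2l.
  have P3 : Z * B * 4 <= Z * A by rewrite -mulrA; apply: ler_wpM2l.
  have P5 : Y * A * 2 <= X * A by rewrite mulrAC; apply: ler_wpM2r.
  have P6 : 0 <= Y * B by apply: mulr_ge0.
  have P7 : 0 <= Z * A by apply: mulr_ge0.
  lia.
Qed.

Lemma sumL_ext (f g : st -> nat) : (forall l, f l = g l) -> sumL f = sumL g.
Proof. by move=> e; rewrite /sumL /= !e. Qed.
Local Close Scope ring_scope.
Fixpoint allwords (k : nat) : seq (seq st) :=
  if k is k'.+1 then [seq l :: w | l <- allst, w <- allwords k'] else [:: [::]].

Lemma count_allwordsS k (F : seq st -> bool) :
  count F (allwords k.+1) = sumL (fun l => count (fun w => F (l :: w)) (allwords k)).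
Proof.
rewrite count_flatten /sumL /allst /= !count_map addn0.
by [].
Qed.

Definition rej (m : nat) (w : seq st) : bool :=
  fin2 (foldl reach2 (reset2 (foldl reach2 Pinit (take m w))) (drop m w)).

Lemma count_H r Q : count (fun w => fin2 (foldl reach2 Q w)) (allwords r) = H r Q.
Proof.
elim: r Q => [|r IH] Q; first by rewrite /= addn0.
rewrite count_allwordsS /=; apply: sumL_ext => l; exact: IH.
Qed.

Lemma count_L m r P :
  count (fun w => fin2 (foldl reach2 (reset2 (foldl reach2 P (take m w))) (drop m w)))
        (allwords (m + r)) = L m r P.
Proof.
elim: m P => [|m IH] P.
  rewrite add0n /= -count_H; apply: eq_count => w; by rewrite take0 drop0.
rewrite addSn count_allwordsS /=; apply: sumL_ext => l; exact: IH.
Qed.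

Lemma mem_allst (l : st) : l \in allst.
Proof. by case: l => [[[] []] []]. Qed.

Lemma mem_allwords k w : (w \in allwords k) = (size w == k).
Proof.
elim: k w => [|k IH] w; first by rewrite inE; case: w.
apply/allpairsP/idP.
  by case=> [[l w']] /= [_ hw' ->]; rewrite /= eqSS -IH.
case: w => [//|l w] /=; rewrite eqSS -IH => hw.
by exists (l, w); split => //; apply: mem_allst.
Qed.

Lemma uniq_allwords k : uniq (allwords k).
Proof.
elim: k => [|k IH] //.
apply: (@allpairs_uniq _ _ _ (fun (l : st) (w : seq st) => l :: w)) => //.
by move=> [l w] [l' w'] _ _ /= [-> ->].
Qed.

Lemma card_count (T : finType) (Q : pred T) : #|[set t | Q t]| = count Q (enum T).
Proof. by rewrite cardsE cardE /enum_mem size_filter (@eq_filter _ _ predT) ?filter_predT ?enumT. Qed.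

Lemma card_words (T : finType) (f : T -> seq st) k (P : seq st -> bool) :
  injective f -> (forall t, size (f t) = k) -> (forall w, size w = k -> exists t, f t = w) ->
  #|[set t | P (f t)]| = count P (allwords k).
Proof.
move=> finj fsz fsurj.
have pe : perm_eq (allwords k) (map f (enum T)).
  apply: uniq_perm; first exact: uniq_allwords.
    by rewrite map_inj_uniq ?enum_uniq.
  move=> w; rewrite mem_allwords; apply/eqP/mapP.
    by move=> /fsurj [t <-]; exists t; rewrite ?mem_enum.
  by case=> t _ ->.
by rewrite (permP pe) count_map card_count.
Qed.

Definition bitn (k j : nat) : bool := odd (k %/ 2 ^ j).

Lemma bsum_lt (b : nat -> bool) N : \sum_(j < N) b j * 2 ^ j < 2 ^ N.
Proof.
elim: N => [|N IH]; first by rewrite big_ord0.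
rewrite big_ord_recr /= expnS.
have : b N * 2 ^ N <= 2 ^ N by case: (b N); rewrite ?mul1n ?mul0n.
move=> h; rewrite mul2n -addnn addnC -addnS; exact: leq_add h IH.
Qed.

Lemma bsum_bit (b : nat -> bool) N k : k < N -> bitn (\sum_(j < N) b j * 2 ^ j) k = b k.
Proof.
elim: N => [//|N IH] hk; rewrite big_ord_recr /=.
have hlt := bsum_lt b N.
have [hkN| ->] : k < N \/ k = N by lia.
  have e : 2 ^ N = 2 ^ (N - k) * 2 ^ k by rewrite -expnD subnK // ltnW.
  rewrite /bitn e mulnA addnC divnMDl ?expn_gt0 //.
  rewrite oddD oddM oddX; have -> : (N - k == 0) = false by lia.
  by rewrite andbF /= -/(bitn _ k) IH.
rewrite /bitn addnC divnMDl ?expn_gt0 // divn_small // addn0; by case: (b N).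
Qed.

Lemma bv_val_rev n (x : bv n) : bv_val x = \sum_(j < n) x (rev_ord j) * 2 ^ j.
Proof.
rewrite /bv_val (reindex_inj rev_ord_inj) /=; apply: eq_bigr => j _.
congr (_ * 2 ^ _); rewrite /=; case: j => j hj /=; lia.
Qed.

Definition LB n (x : bv n) (j : nat) : bool := bitn (bv_val x) j.

Definition lsbf n (x : bv n) (j : nat) : bool := if insub j is Some i then x (rev_ord i) else false.

Lemma LB_ord n (x : bv n) (i : 'I_n) : LB x (n.-1 - i) = x i.
Proof.
rewrite /LB bv_val_rev.
rewrite (eq_bigr (fun j : 'I_n => lsbf x j * 2 ^ j)); last by move=> j _; rewrite /lsbf valK.
rewrite bsum_bit; last by case: i => i hi /=; lia.
rewrite /lsbf insubT; first by case: i => i hi /=; lia.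
move=> h; congr (x _); apply: val_inj => /=; case: i h => i hi /= h; lia.
Qed.

Lemma ordj_lt n j : j < n -> n.-1 - j < n.
Proof. lia. Qed.
Definition ordj n j (h : j < n) : 'I_n := Ordinal (ordj_lt h).

Lemma LB_lt n (x : bv n) j (h : j < n) : LB x j = x (ordj h).
Proof. by rewrite -LB_ord /=; congr (LB x _); lia. Qed.

Lemma bv_ext n (x y : bv n) : (forall j, j < n -> LB x j = LB y j) -> x = y.
Proof.
move=> e; apply/ffunP => i; rewrite -!LB_ord; apply: e; case: i => i hi /=; lia.
Qed.

Definition mkbv n (f : nat -> bool) : bv n := [ffun i : 'I_n => f (n.-1 - i)].
Lemma LB_mk n f j : j < n -> LB (mkbv n f) j = f j.
Proof. move=> h; rewrite (LB_lt _ h) ffunE /=; congr f; lia. Qed.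

Lemma LB_of_nat n k j : j < n -> LB (bv_of_nat n k) j = bitn k j.
Proof. move=> h; rewrite (LB_lt _ h) ffunE /bitn /=; congr (odd (_ %/ 2 ^ _)); lia. Qed.

Fixpoint carry (p q : nat -> bool) (c : bool) (j : nat) : bool :=
  if j is j'.+1 then maj (p j') (q j') (carry p q c j') else c.

Lemma add_div p q j : (p + q) %/ 2 ^ j = p %/ 2 ^ j + q %/ 2 ^ j + carry (bitn p) (bitn q) false j.
Proof.
elim: j => [|j IH]; first by rewrite !expn0 !divn1 addn0.
rewrite expnSr !divnMA IH /= /bitn.
set P := p %/ 2 ^ j; set Q := q %/ 2 ^ j; set c := carry _ _ _ j.
rewrite {1}(divn_eq P 2) {1}(divn_eq Q 2) !modn2.
have -> : P %/ 2 * 2 + odd P + (Q %/ 2 * 2 + odd Q) + c = (P %/ 2 + Q %/ 2) * 2 + (odd P + odd Q + c) by lia.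
rewrite divnMDl //; congr (_ + _).
by case: (odd P); case: (odd Q); case: c.
Qed.

Lemma bitn_add p q j : bitn (p + q) j = bitn p j (+) bitn q j (+) carry (bitn p) (bitn q) false j.
Proof. by rewrite {1}/bitn add_div !oddD oddb. Qed.

Lemma carry_ext p q p' q' c j : (forall i, i < j -> p i = p' i /\ q i = q' i) ->
  carry p q c j = carry p' q' c j.
Proof.
elim: j => [//|j IH] h /=.
have [e1 e2] := h j (ltnSn j); rewrite e1 e2 IH // => i hi; apply: h; lia.
Qed.

Lemma LB_add n (x y : bv n) j : j < n ->
  LB (bv_add x y) j = LB x j (+) LB y j (+) carry (LB x) (LB y) false j.
Proof. by move=> h; rewrite /bv_add LB_of_nat // bitn_add. Qed.

Lemma LB_xor n (x y : bv n) j : j < n -> LB (bv_xor x y) j = LB x j (+) LB y j.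
Proof. by move=> h; rewrite !(LB_lt _ h) ffunE. Qed.

Lemma modn_sub1 a N : N <= a -> a < N + N -> a %% N = a - N.
Proof. move=> h1 h2; rewrite -{1}(subnK h1) modnDr modn_small //; lia. Qed.

Lemma rot_arith n' r k : r <= n'.+1 -> k < n'.+1 ->
  n' - (n' - k + r) %% n'.+1 = (k + (n'.+1 - r)) %% n'.+1.
Proof.
move=> hr hk.
have [h|h] : r <= k \/ k < r by lia.
  rewrite (@modn_small (n' - k + r)); last by lia.
  rewrite modn_sub1; lia.
rewrite modn_sub1; try lia.
rewrite modn_small; lia.
Qed.

Lemma LB_rotl n' (x : bv n'.+1) r k : r <= n'.+1 -> k < n'.+1 ->
  LB (bv_rotl x r) k = LB x ((k + (n'.+1 - r)) %% n'.+1).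
Proof.
move=> hr hk; rewrite (LB_lt _ hk) ffunE /rot_idx -LB_ord; congr (LB x _).
rewrite inordK ?ltn_mod // /=.
exact: rot_arith.
Qed.

Definition d0 : st := (false, false, false).
Fixpoint runst (s : st) (w : seq st) (X Z : nat -> bool) (j : nat) : st :=
  if j is j'.+1 then nxt (runst s w X Z j') (nth d0 w j') (X j') (Z j') else s.
Definition runok (s : st) (w : seq st) (X Z : nat -> bool) : Prop :=
  forall j, j < size w -> okst (runst s w X Z j) (nth d0 w j).

Lemma reach_spec S l t :
  t \in reach S l <-> exists s, [/\ s \in S, okst s l & exists x z, nxt s l x z = t].
Proof.
rewrite mem_filter mem_allst andbT; split.
  case/hasP=> s hs /andP [ho /hasP [[x z] _ /eqP e]]; exists s; split => //; by exists x, z.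
case=> s [hs ho [x [z e]]]; apply/hasP; exists s => //; rewrite ho andTb.
by apply/hasP; exists (x, z); [case: x {e}; case: z | rewrite /= e].
Qed.

Lemma runst_shift s l w X Z j :
  runst s (l :: w) X Z j.+1 = runst (nxt s l (X 0) (Z 0)) w (fun i => X i.+1) (fun i => Z i.+1) j.
Proof. by elim: j => [//|j IH]; rewrite -[LHS]/(nxt (runst s (l :: w) X Z j.+1) (nth d0 w j) (X j.+1) (Z j.+1)) IH. Qed.

Lemma foldl_reach_spec w S t :
  t \in foldl reach S w <-> exists s X Z, [/\ s \in S, runok s w X Z & runst s w X Z (size w) = t].
Proof.
elim: w S => [|l w IH] S.
  rewrite /=; split; first by move=> h; exists t, xpred0, xpred0; split.
  by case=> s [X [Z [hs _ <-]]].
rewrite -[foldl reach S (l :: w)]/(foldl reach (reach S l) w) IH; split.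
  case=> s1 [X [Z [/reach_spec [s [hs ho [x [z e]]]] hr <-]]].
  exists s, (fun i => if i is i'.+1 then X i' else x), (fun i => if i is i'.+1 then Z i' else z).
  split => //; last by rewrite -[size (l :: w)]/(size w).+1 runst_shift e.
  move=> [|j] hj; first exact: ho.
  rewrite -[nth d0 (l :: w) j.+1]/(nth d0 w j) runst_shift e; apply: hr; rewrite /= in hj; lia.
case=> s [X [Z [hs hr <-]]].
exists (nxt s l (X 0) (Z 0)), (fun i => X i.+1), (fun i => Z i.+1); split.
- apply/reach_spec; exists s; split => //; last by exists (X 0), (Z 0).
  exact: (hr 0).
- move=> j hj; have := hr j.+1; rewrite -[nth d0 (l :: w) j.+1]/(nth d0 w j) runst_shift; apply; rewrite /=; lia.
- by rewrite -[size (l :: w)]/(size w).+1 runst_shift.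
Qed.

Lemma runst_carry s w X Z j :
  runst s w X Z j =
  (carry X (fun i => (nth d0 w i).1.1) s.1.1 j,
   carry (fun i => X i (+) Z i) (fun i => (nth d0 w i).1.2) s.1.2 j,
   carry Z (fun i => (nth d0 w i).2) s.2 j).
Proof.
elim: j => [|j IH] /=; first by case: s => [[]].
rewrite IH; by case: (nth d0 w j) => [[a b] g].
Qed.

Lemma foldl_reach2 w P : foldl reach2 P w = (foldl reach P.1 w, foldl reach P.2 w).
Proof. by elim: w P => [|l w IH] [P0 P1] //=; rewrite IH. Qed.

Lemma reset_spec S t : t \in reset S <-> t.2 = false /\ exists s, s \in S /\ s.1 = t.1.
Proof.
rewrite mem_filter mem_allst andbT; split.
  by case/andP=> /eqP -> /hasP [s hs /eqP e]; split => //; exists s.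
by case=> -> [s [hs e]]; rewrite eqxx /=; apply/hasP; exists s => //; apply/eqP.
Qed.

Definition accR (m : nat) (w : seq st) : Prop :=
  exists kap X1 Z1 X2 Z2,
    [/\ runok (false, false, kap) (take m w) X1 Z1,
        runok ((runst (false, false, kap) (take m w) X1 Z1 (size (take m w))).1, false) (drop m w) X2 Z2 &
        (runst ((runst (false, false, kap) (take m w) X1 Z1 (size (take m w))).1, false) (drop m w) X2 Z2
           (size (drop m w))).2 = kap].

Lemma rej_acc m w : rej m w = false <-> accR m w.
Proof.
rewrite /rej foldl_reach2 /= foldl_reach2 /= /fin2 /=.
set u := take m w; set v := drop m w.
have key : forall kap, (exists t, t \in foldl reach (reset (foldl reach [:: (false,false,kap)] u)) v /\ t.2 = kap)
   <-> exists X1 Z1 X2 Z2,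
    [/\ runok (false, false, kap) u X1 Z1,
        runok ((runst (false, false, kap) u X1 Z1 (size u)).1, false) v X2 Z2 &
        (runst ((runst (false, false, kap) u X1 Z1 (size u)).1, false) v X2 Z2 (size v)).2 = kap].
  move=> kap; split.
    case=> t [/foldl_reach_spec [[[c d] k] [X2 [Z2 [/reset_spec [/= h0 [s1 [/foldl_reach_spec [s [X1 [Z1 [hs hr1 e1]]]] /= e2]]] hr2 e3]]]] ht].
    subst k; move: hs; rewrite inE => /eqP hs; subst s.
    by exists X1, Z1, X2, Z2; rewrite e1 e2; split => //; rewrite e3.
  case=> X1 [Z1 [X2 [Z2 [hr1 hr2 e]]]].
  exists (runst ((runst (false, false, kap) u X1 Z1 (size u)).1, false) v X2 Z2 (size v)); split => //.
  apply/foldl_reach_spec; exists ((runst (false, false, kap) u X1 Z1 (size u)).1, false), X2, Z2; split => //.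
  apply/reset_spec; split => //; exists (runst (false, false, kap) u X1 Z1 (size u)); split => //.
  by apply/foldl_reach_spec; exists (false, false, kap), X1, Z1; split => //; rewrite inE.
split.
  move/negbT; rewrite negb_and !negbK; case/orP.
    case/hasP=> t ht /eqP e.
    have [X1 [Z1 [X2 [Z2 H]]]] := (key false).1 (ex_intro _ t (conj ht e)).
    by exists false, X1, Z1, X2, Z2.
  case/hasP=> t ht /eqP e.
  have [X1 [Z1 [X2 [Z2 H]]]] := (key true).1 (ex_intro _ t (conj ht e)).
  by exists true, X1, Z1, X2, Z2.
case=> kap [X1 [Z1 [X2 [Z2 H]]]].
have [t [ht e]] := (key kap).2 (ex_intro _ X1 (ex_intro _ Z1 (ex_intro _ X2 (ex_intro _ Z2 H)))).
apply/negbTE; rewrite negb_and !negbK; case: kap H e ht => H e ht; apply/orP; [right|left]; apply/hasP; exists t => //; by rewrite e.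
Qed.

Definition condb n r (a b g x y : bv n) : bool :=
  bv_rotl (bv_xor (bv_add x a) (bv_add y b)) r == bv_add (bv_rotl (bv_xor x y) r) g.

Definition sig n r k := (k + (n - r)) %% n.

Definition Kc n r (x y g : bv n) := carry (LB (bv_rotl (bv_xor x y) r)) (LB g) false.

Definition Ecnd n r (a b g x y : bv n) : Prop :=
  forall k, k < n ->
    LB a (sig n r k) (+) LB b (sig n r k) (+) carry (LB x) (LB a) false (sig n r k)
      (+) carry (LB y) (LB b) false (sig n r k) = LB g k (+) Kc r x y g k.



Lemma bool_key (p q a b c d g k : bool) :
  (p (+) a (+) c (+) (q (+) b (+) d) == (p (+) q) (+) g (+) k) = (a (+) b (+) c (+) d == g (+) k).
Proof. by case: p; case: q; case: a; case: b; case: c; case: d; case: g; case: k. Qed.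

Lemma cond_E n' r (a b g x y : bv n'.+1) : r <= n'.+1 ->
  condb r a b g x y <-> Ecnd r a b g x y.
Proof.
move=> hr; rewrite /condb /Ecnd; split.
  move/eqP => e k hk.
  have := congr1 (fun z => LB z k) e => /=.
  have hs : sig n'.+1 r k < n'.+1 by rewrite /sig ltn_mod.
  rewrite LB_rotl // LB_xor -/(sig n'.+1 r k) // !LB_add // LB_rotl // LB_xor -/(sig n'.+1 r k) //.
  move=> e2; apply/eqP; rewrite -(bool_key (LB x (sig n'.+1 r k)) (LB y (sig n'.+1 r k))).
  by rewrite e2 /Kc.
move=> h; apply/eqP/bv_ext => k hk.
have hs : sig n'.+1 r k < n'.+1 by rewrite /sig ltn_mod.
rewrite LB_rotl // LB_xor -/(sig n'.+1 r k) // !LB_add // LB_rotl // LB_xor -/(sig n'.+1 r k) //.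
apply/eqP; rewrite bool_key; apply/eqP; exact: h.
Qed.

Definition wordr n r (a b g : bv n) : seq st :=
  [seq (LB a j, LB b j, LB g ((j + r) %% n)) | j <- iota 0 n].

Lemma size_wordr n r (a b g : bv n) : size (wordr r a b g) = n.
Proof. by rewrite size_map size_iota. Qed.

Lemma nth_wordr n r (a b g : bv n) j : j < n ->
  nth d0 (wordr r a b g) j = (LB a j, LB b j, LB g ((j + r) %% n)).
Proof. by move=> h; rewrite (nth_map 0) ?size_iota // nth_iota. Qed.

Lemma carry_shift p q c i j :
  carry p q c (i + j) = carry (fun t => p (i + t)) (fun t => q (i + t)) (carry p q c i) j.
Proof. by elim: j => [|j IH]; rewrite ?addn0 // addnS /= IH. Qed.

Lemma u_states n' r (a b g x y : bv n'.+1) X1 Z1 kap :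
  0 < r -> r < n'.+1 ->
  (forall i, i < n'.+1 - r -> [/\ X1 i = LB x i, X1 i (+) Z1 i = LB y i &
                                   Z1 i = LB (bv_rotl (bv_xor x y) r) (i + r)]) ->
  kap = Kc r x y g r ->
  forall j, j <= n'.+1 - r ->
  runst (false, false, kap) (take (n'.+1 - r) (wordr r a b g)) X1 Z1 j =
    (carry (LB x) (LB a) false j, carry (LB y) (LB b) false j, Kc r x y g (j + r)).
Proof.
move=> hr0 hr hX hk j hj; rewrite runst_carry /=.
have hu : forall i, i < n'.+1 - r -> nth d0 (take (n'.+1 - r) (wordr r a b g)) i =
            (LB a i, LB b i, LB g (i + r)).
  move=> i hi; rewrite nth_take // nth_wordr; last by lia.
  by rewrite modn_small //; lia.
congr (_, _, _).
- apply: carry_ext => i hi; have [h1 h2 h3] := hX i (leq_trans hi hj).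
  by rewrite h1 hu //; apply: leq_trans hi hj.
- apply: carry_ext => i hi; have [h1 h2 h3] := hX i (leq_trans hi hj).
  by rewrite h2 hu //; apply: leq_trans hi hj.
elim: j hj => [|j IH] hj /=; first by rewrite add0n.
rewrite IH; last by lia.
have [h1 h2 h3] := hX j hj; rewrite hu // h3 /Kc /=.
by [].
Qed.

Lemma v_states n' r (a b g x y : bv n'.+1) X2 Z2 :
  0 < r -> r < n'.+1 ->
  (forall i, i < r -> [/\ X2 i = LB x (n'.+1 - r + i), X2 i (+) Z2 i = LB y (n'.+1 - r + i) &
                        Z2 i = LB (bv_rotl (bv_xor x y) r) i]) ->
  forall j, j <= r ->
  runst ((carry (LB x) (LB a) false (n'.+1 - r), carry (LB y) (LB b) false (n'.+1 - r)), false)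
        (drop (n'.+1 - r) (wordr r a b g)) X2 Z2 j =
    (carry (LB x) (LB a) false (n'.+1 - r + j), carry (LB y) (LB b) false (n'.+1 - r + j), Kc r x y g j).
Proof.
move=> hr0 hr hX j hj; rewrite runst_carry /=.
have hv : forall i, i < r -> nth d0 (drop (n'.+1 - r) (wordr r a b g)) i =
            (LB a (n'.+1 - r + i), LB b (n'.+1 - r + i), LB g i).
  move=> i hi; rewrite nth_drop nth_wordr; last by lia.
  have -> : (n'.+1 - r + i + r) = i + n'.+1 by lia.
  by rewrite modnDr modn_small //; lia.
congr (_, _, _).
- rewrite carry_shift; apply: carry_ext => i hi; have [h1 h2 h3] := hX i (leq_trans hi hj).
  by rewrite h1 hv //; apply: leq_trans hi hj.
- rewrite carry_shift; apply: carry_ext => i hi; have [h1 h2 h3] := hX i (leq_trans hi hj).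
  by rewrite h2 hv //; apply: leq_trans hi hj.
rewrite /Kc; apply: carry_ext => i hi; have [h1 h2 h3] := hX i (leq_trans hi hj).
by rewrite h3 hv //; apply: leq_trans hi hj.
Qed.

Lemma nth_u n' r (a b g : bv n'.+1) i : r < n'.+1 -> i < n'.+1 - r ->
  nth d0 (take (n'.+1 - r) (wordr r a b g)) i = (LB a i, LB b i, LB g (i + r)).
Proof.
move=> hr hi; rewrite nth_take // nth_wordr; last by lia.
by rewrite modn_small //; lia.
Qed.

Lemma nth_v n' r (a b g : bv n'.+1) i : r < n'.+1 -> i < r ->
  nth d0 (drop (n'.+1 - r) (wordr r a b g)) i = (LB a (n'.+1 - r + i), LB b (n'.+1 - r + i), LB g i).
Proof.
move=> hr hi; rewrite nth_drop nth_wordr; last by lia.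
have -> : (n'.+1 - r + i + r) = i + n'.+1 by lia.
by rewrite modnDr modn_small //; lia.
Qed.

Lemma sig_u n r j : 0 < r -> r < n -> j < n - r -> sig n r (j + r) = j.
Proof.
move=> h0 h1 h2; rewrite /sig.
have -> : j + r + (n - r) = j + n by lia.
by rewrite modnDr modn_small //; lia.
Qed.

Lemma sig_v n r j : 0 < r -> r < n -> j < r -> sig n r j = n - r + j.
Proof. move=> h0 h1 h2; rewrite /sig modn_small; lia. Qed.

Lemma Zp_eq n' r (x y : bv n'.+1) k : r <= n'.+1 -> k < n'.+1 ->
  LB (bv_rotl (bv_xor x y) r) k = LB x (sig n'.+1 r k) (+) LB y (sig n'.+1 r k).
Proof. by move=> hr hk; rewrite LB_rotl // LB_xor // /sig ltn_mod. Qed.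

Lemma runst_fst s s' w X Z j : s.1 = s'.1 -> (runst s w X Z j).1 = (runst s' w X Z j).1.
Proof. by move=> e; rewrite !runst_carry /= e. Qed.

Lemma sem n' r (a b g : bv n'.+1) : 0 < r -> r < n'.+1 ->
  (exists x y, condb r a b g x y) <-> accR (n'.+1 - r) (wordr r a b g).
Proof.
move=> hr0 hr.
have hrle : r <= n'.+1 by lia.
have su : size (take (n'.+1 - r) (wordr r a b g)) = n'.+1 - r.
  by rewrite size_take size_wordr; case: ifP => //; lia.
have sv : size (drop (n'.+1 - r) (wordr r a b g)) = r.
  by rewrite size_drop size_wordr; lia.
split.
  case=> x [y /(cond_E _ _ _ _ _ hrle) hE].
  set m := n'.+1 - r.
  have hu := @u_states n' r a b g x y (LB x) (fun j => LB x j (+) LB y j) (Kc r x y g r) hr0 hr.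
  have hu' := hu _ erefl; clear hu.
  have hv := @v_states n' r a b g x y (fun j => LB x (m + j)) (fun j => LB x (m + j) (+) LB y (m + j)) hr0 hr.
  exists (Kc r x y g r), (LB x), (fun j => LB x j (+) LB y j),
         (fun j => LB x (m + j)), (fun j => LB x (m + j) (+) LB y (m + j)).
  have hU : forall i, i < m -> [/\ LB x i = LB x i, LB x i (+) (LB x i (+) LB y i) = LB y i &
                 LB x i (+) LB y i = LB (bv_rotl (bv_xor x y) r) (i + r)].
    move=> i hi; split => //; first by case: (LB x i); case: (LB y i).
    by rewrite Zp_eq ?sig_u //; lia.
  have hV : forall i, i < r -> [/\ LB x (m + i) = LB x (m + i),
                 LB x (m + i) (+) (LB x (m + i) (+) LB y (m + i)) = LB y (m + i) &
                 LB x (m + i) (+) LB y (m + i) = LB (bv_rotl (bv_xor x y) r) i].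
    move=> i hi; split => //; first by case: (LB x (m + i)); case: (LB y (m + i)).
    by rewrite Zp_eq ?sig_v //; lia.
  have hv' := hv hV; clear hv.
  rewrite su sv hu' // /=; split.
  - move=> j; rewrite su => hj; rewrite hu' ?(ltnW hj) // nth_u // /=.
    apply/eqP; have := hE (j + r) ltac:(lia); rewrite sig_u //.
  - move=> j; rewrite sv => hj; rewrite hv' ?(ltnW hj) // nth_v // /=.
    apply/eqP; have := hE j ltac:(lia); rewrite sig_v //.
  - by rewrite hv'.
case=> kap [X1 [Z1 [X2 [Z2 [hr1 hr2 hf]]]]].
set m := n'.+1 - r.
pose Xf j := if j < m then X1 j else X2 (j - m).
pose Zf j := if j < m then Z1 j else Z2 (j - m).
exists (mkbv n'.+1 Xf), (mkbv n'.+1 (fun j => Xf j (+) Zf j)).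
set x := mkbv n'.+1 Xf; set y := mkbv n'.+1 (fun j => Xf j (+) Zf j).
apply/(cond_E _ _ _ _ _ hrle).
have hZ : forall k, k < n'.+1 -> LB (bv_rotl (bv_xor x y) r) k = Zf (sig n'.+1 r k).
  move=> k hk; rewrite Zp_eq // !LB_mk ?/sig ?ltn_mod //.
  by case: (Xf _); case: (Zf _).
have hU : forall i, i < m -> [/\ X1 i = LB x i, X1 i (+) Z1 i = LB y i &
                 Z1 i = LB (bv_rotl (bv_xor x y) r) (i + r)].
  move=> i hi; rewrite !LB_mk; try lia.
  rewrite hZ ?sig_u //; try lia.
  by rewrite /Xf /Zf hi.
have hV : forall i, i < r -> [/\ X2 i = LB x (m + i), X2 i (+) Z2 i = LB y (m + i) &
                 Z2 i = LB (bv_rotl (bv_xor x y) r) i].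
  move=> i hi; rewrite !LB_mk; try lia.
  rewrite hZ ?sig_v //; try lia.
  rewrite /Xf /Zf; have -> : (m + i < m) = false by lia.
  by rewrite addKn.
have hu0 := @u_states n' r a b g x y X1 Z1 (Kc r x y g r) hr0 hr hU erefl.
have hv := @v_states n' r a b g x y X2 Z2 hr0 hr hV.
have e1 : (runst (false, false, kap) (take m (wordr r a b g)) X1 Z1 m).1 =
          (carry (LB x) (LB a) false m, carry (LB y) (LB b) false m).
  by rewrite (runst_fst _ _ _ _ (s' := (false, false, Kc r x y g r))) // hu0.
rewrite su in hr2 hf; rewrite sv in hf; rewrite e1 in hr2 hf.
have ek : kap = Kc r x y g r by rewrite -hf hv.
have hu := @u_states n' r a b g x y X1 Z1 kap hr0 hr hU ek.
move=> k hk.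
have [hk1|hk1] : r <= k \/ k < r by lia.
  have hj : k - r < m by lia.
  have := hr1 (k - r); rewrite su => /(_ hj).
  rewrite hu ?(ltnW hj) // nth_u // /= subnK //.
  have -> : sig n'.+1 r k = k - r by rewrite -{1}(subnK hk1) sig_u.
  by move/eqP.
have := hr2 k; rewrite sv => /(_ hk1).
rewrite hv ?(ltnW hk1) // nth_v // /= sig_v //.
by move/eqP.
Qed.

Lemma adpXR0 n r (a b g : bv n) : (adpXR r a b g == 0%R) = (adp_count r a b g == 0).
Proof.
rewrite /adpXR mulf_eq0 invr_eq0 !pnatr_eq0.
have -> : (4 ^ n == 0) = false by rewrite expn_eq0.
by rewrite orbF.
Qed.

Lemma adp_rej n' r (a b g : bv n'.+1) : 0 < r -> r < n'.+1 ->
  (adp_count r a b g == 0) = rej (n'.+1 - r) (wordr r a b g).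
Proof.
move=> h0 h1.
case hrj: (rej _ _).
  rewrite cards_eq0; apply/eqP/setP => p; rewrite inE in_set0; apply/negbTE/negP => hc.
  have : accR (n'.+1 - r) (wordr r a b g) by apply/sem => //; exists p.1, p.2.
  by move/rej_acc; rewrite hrj.
have /(sem a b g h0 h1) [x [y hc]] : accR (n'.+1 - r) (wordr r a b g) by apply/rej_acc.
apply/negbTE; rewrite -lt0n card_gt0; apply/set0Pn; exists (x, y); by rewrite inE.
Qed.

Lemma mod_back N r k : r <= N -> k < N -> ((k + (N - r)) %% N + r) %% N = k.
Proof.
move=> hr hk; rewrite modnDml.
have -> : k + (N - r) + r = k + N by lia.
by rewrite modnDr modn_small.
Qed.

Lemma mod_fwd N r j : r <= N -> j < N -> ((j + r) %% N + (N - r)) %% N = j.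
Proof.
move=> hr hj; rewrite modnDml.
have -> : j + r + (N - r) = j + N by lia.
by rewrite modnDr modn_small.
Qed.

Lemma Nzero_L n' r : 0 < r -> r < n'.+1 -> Nzero n'.+1 r = L (n'.+1 - r) r Pinit.
Proof.
move=> h0 h1.
have hrle : r <= n'.+1 by lia.
pose f (t : bv n'.+1 * bv n'.+1 * bv n'.+1) := wordr r t.1.1 t.1.2 t.2.
have -> : Nzero n'.+1 r = #|[set t | rej (n'.+1 - r) (f t)]|.
  by apply: eq_card => t; rewrite !inE adpXR0 adp_rej.
rewrite (@card_words _ f n'.+1).
- rewrite -[in allwords _](subnK (ltnW h1)) -count_L; exact: eq_count.
- move=> [[a b] g] [[a' b'] g'] /= e.
  have en : forall j, j < n'.+1 -> nth d0 (wordr r a b g) j = nth d0 (wordr r a' b' g') j.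
    by move=> j _; rewrite /f /= in e; rewrite e.
  have ea : a = a' by apply: bv_ext => j hj; have := en j hj; rewrite !nth_wordr // => -[].
  have eb : b = b' by apply: bv_ext => j hj; have := en j hj; rewrite !nth_wordr // => -[].
  have eg : g = g'.
    apply: bv_ext => k hk.
    have hj : (k + (n'.+1 - r)) %% n'.+1 < n'.+1 by rewrite ltn_mod.
    by have := en _ hj; rewrite !nth_wordr // mod_back //; case => _ _ ->.
  by rewrite ea eb eg.
- by move=> t; rewrite /f size_wordr.
- move=> w hw.
  exists (mkbv n'.+1 (fun j => (nth d0 w j).1.1), mkbv n'.+1 (fun j => (nth d0 w j).1.2),
          mkbv n'.+1 (fun k => (nth d0 w ((k + (n'.+1 - r)) %% n'.+1)).2)).
  apply: (@eq_from_nth _ d0); rewrite /f size_wordr ?hw // => j hj.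
  rewrite nth_wordr // /= !LB_mk ?ltn_mod // mod_fwd //.
  by case: (nth d0 w j) => [[]].
Qed.

Theorem corollary6 (n : nat) (hn : 5 <= n) (r : nat) (hr1 : 2 <= r) (hr2 : r <= n - 1) :
  Nzero n r < Nzero n 1.
Proof.
case: n hn hr2 => // n' hn hr2.
have hr : r < n'.+1 by lia.
rewrite !Nzero_L //; try lia.
have h := @ineq_cf (n'.+1 - r) r ltac:(lia) hr1 ltac:(lia).
have e : ((n'.+1 - r + r).-1 = n'.+1 - 1)%N by lia.
rewrite e in h.
rewrite -(@L_cf (n'.+1 - r) r Pinit ltac:(lia) ltac:(lia) Pinit_in) in h.
rewrite -(@L_cf (n'.+1 - 1) 1 Pinit ltac:(lia) ltac:(lia) Pinit_in) in h.
by rewrite ltr_pM2r // ltr_nat in h.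
Qed.
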